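(* Let $\bm{f}:\mathbb{R}^n\to\mathbb{R}^n$ be twice differentiable, let $\hat{\bm{y}}^n\in\mathbb{R}^n$, $s\ge1$ an integer, $\varepsilon\ge0$, and $\epsilon>0$ a constant. For $\Delta t>0$ consider the mixed-precision RKC step $$\hat{\bm{d}}_0=\bm{0},\quad \hat{\bm{d}}_1=\mu_1\Delta t\bm{f}(\hat{\bm{y}}^n),\quad \hat{\bm{d}}_j=\nu_j\hat{\bm{d}}_{j-1}+\kappa_j\hat{\bm{d}}_{j-2}+\mu_j\Delta t\big(\bm{f}(\hat{\bm{y}}^n)+\hat\Delta\bm{f}_{j-1}\big)+\gamma_j\Delta t\bm{f}(\hat{\bm{y}}^n),\ j=2,\dots,s,\quad \hat{\bm{y}}^{n+1}=\hat{\bm{y}}^n+\hat{\bm{d}}_s,$$ where $\hat\Delta\bm{f}_1,\dots,\hat\Delta\bm{f}_{s-1}\in\mathbb{R}^n$ are given vectors (which may depend on $\Delta t$ and on previous stages), and $\Delta\bm{f}_j:=\bm{f}(\hat{\bm{y}}^n+\hat{\bm{d}}_j)-\bm{f}(\hat{\bm{y}}^n)$. (a) If the coefficients are the order-$p$ RKC coefficients with $p=1$ or $p=2$ (with $s\ge2$ if $p=2$), and $\hat\Delta\bm{f}_j=\Delta\bm{f}_j+O(\epsilon\Delta t)$ as $\Delta t\to0$ for all $j$, then $$\hat{\bm{y}}^{n+1}=\hat{\bm{y}}^n+\Delta t\bm{f}(\hat{\bm{y}}^n)+O(\epsilon\Delta t^2+\Delta t^2)\quad\text{as }\Delta t\to0.$$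 (b) If the coefficients are the RKC coefficients with $p=2$ ($s\ge2$) and $\hat\Delta\bm{f}_j=\Delta\bm{f}_j+O(\Delta t^2)$ as $\Delta t\to0$ for all $j$, then $$\hat{\bm{y}}^{n+1}=\hat{\bm{y}}^n+\Delta t\bm{f}(\hat{\bm{y}}^n)+\tfrac12\Delta t^2\bm{f}'(\hat{\bm{y}}^n)\bm{f}(\hat{\bm{y}}^n)+O(\Delta t^3)\quad\text{as }\Delta t\to0.$$
   Context: All $O(\cdot)$ are as $\Delta t\to0$ with $\bm{f}$, $\hat{\bm{y}}^n$, $s$, $\varepsilon$, $\epsilon$ fixed. Chebyshev polynomials $T_0=1$, $T_1=x$, $T_j=2xT_{j-1}-T_{j-2}$. Order-$p$ RKC coefficients with $s$ stages and damping $\varepsilon$: $\omega_0=1+\varepsilon/s^2$. If $p=1$: $\omega_1=T_s(\omega_0)/T_s'(\omega_0)$, $b_j=1/T_j(\omega_0)$, $j=0,\dots,s$. If $p=2$: $\omega_1=T_s'(\omega_0)/T_s''(\omega_0)$, $b_j=T_j''(\omega_0)/T_j'(\omega_0)^2$ for $j=2,\dots,s$, $b_0=b_1=b_2$. Then $a_j=1-b_jT_j(\omega_0)$; $\mu_1=b_1\omega_1$; for $j=2,\dots,s$: $\mu_j=2\omega_1b_j/b_{j-1}$, $\nu_j=2\omega_0b_j/b_{j-1}$, $\kappa_j=-b_j/b_{j-2}$, $\gamma_j=-\mu_ja_{j-1}$. *)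

(* Defs.v *)
From HB Require Import structures.
From mathcomp Require Import all_boot all_order all_algebra.
From mathcomp Require Import all_classical all_reals all_analysis.
Set Implicit Arguments. Unset Strict Implicit. Unset Printing Implicit Defensive.
Import Order.TTheory GRing.Theory Num.Theory.
Import numFieldNormedType.Exports.
Local Open Scope ring_scope.

Fixpoint cheb (R : nzRingType) (j : nat) : {poly R} :=
  match j with
  | 0 => 1
  | 1 => 'X
  | (m.+1 as k).+1 => 2%:R *: 'X * cheb R k - cheb R m
  end.

Section RKC.
Variables (R : realType) (p s : nat) (eps : R).

Definition T (j : nat) (x : R) : R := (cheb R j).[x].
Definition T' (j : nat) (x : R) : R := ((cheb R j)^`()).[x].
Definition T'' (j : nat) (x : R) : R := ((cheb R j)^`(2)).[x].

Definition w0 : R := 1 + eps / (s%:R ^+ 2).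
(* order-p RKC coefficients (p = 1, or p = 2 for any other value of p) *)
Definition w1 : R :=
  if p == 1%N then T s w0 / T' s w0 else T' s w0 / T'' s w0.
Definition bcoef (j : nat) : R :=
  if p == 1%N then 1 / T j w0
  else let j' := maxn j 2 in T'' j' w0 / (T' j' w0) ^+ 2.
Definition acoef (j : nat) : R := 1 - bcoef j * T j w0.
Definition mu1 : R := bcoef 1 * w1.
Definition mu (j : nat) : R := 2 * w1 * bcoef j / bcoef j.-1.
Definition nu (j : nat) : R := 2 * w0 * bcoef j / bcoef j.-1.
Definition kappa (j : nat) : R := - (bcoef j / bcoef j.-2).
Definition gamma (j : nat) : R := - (mu j * acoef j.-1).

Variables (n : nat) (f : 'rV[R]_n -> 'rV[R]_n) (y : 'rV[R]_n)
  (dfhat : nat -> R -> 'rV[R]_n) (dt : R).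

Definition rkc_stage (j : nat) (dm2 dm1 : 'rV[R]_n) : 'rV[R]_n :=
  nu j *: dm1 + kappa j *: dm2 + (mu j * dt) *: (f y + dfhat j.-1 dt)
  + (gamma j * dt) *: f y.

(* (d_k, d_{k+1}) *)
Fixpoint rkc_pair (k : nat) : 'rV[R]_n * 'rV[R]_n :=
  match k with
  | 0 => (0, (mu1 * dt) *: f y)
  | k'.+1 => let (a, b) := rkc_pair k' in (b, rkc_stage k.+1 a b)
  end.

Definition rkc_d (j : nat) : 'rV[R]_n := (rkc_pair j).1.
Definition Delta_f (j : nat) : 'rV[R]_n := f (y + rkc_d j) - f y.
Definition rkc_step : 'rV[R]_n := y + rkc_d s.
End RKC.

(* Main.v *)
Require Import Defs.
From HB Require Import structures.
From mathcomp Require Import all_boot all_order all_algebra.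
From mathcomp Require Import all_classical all_reals all_analysis.
From mathcomp Require Import ring lra zify.
Import Order.TTheory GRing.Theory Num.Theory.
Import numFieldNormedType.Exports.
Local Open Scope ring_scope.

Set Implicit Arguments. Unset Strict Implicit. Unset Printing Implicit Defensive.

Section Cheb.
Variable R : realType.

Lemma chebSS k : cheb R k.+2 = 2%:R *: 'X * cheb R k.+1 - cheb R k.
Proof. by []. Qed.

Lemma TSS k (x : R) : T k.+2 x = 2 * x * T k.+1 x - T k x.
Proof. by rewrite /T chebSS !hornerE. Qed.

Lemma dchebSS k : (cheb R k.+2)^`() =
  2%:R *: cheb R k.+1 + 2%:R *: 'X * (cheb R k.+1)^`() - (cheb R k)^`().
Proof. by rewrite chebSS derivB derivM derivZ derivX -!scalerAl mul1r. Qed.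

Lemma T'SS k (x : R) : T' k.+2 x = 2 * T k.+1 x + 2 * x * T' k.+1 x - T' k x.
Proof. by rewrite /T' /T dchebSS !hornerE. Qed.

Lemma derivn2 (p : {poly R}) : p^`(2) = p^`()^`(). Proof. by []. Qed.

Lemma T''SS k (x : R) : T'' k.+2 x = 4 * T' k.+1 x + 2 * x * T'' k.+1 x - T'' k x.
Proof.
rewrite /T'' /T' !derivn2 dchebSS derivB derivD derivM !derivZ derivX.
rewrite !hornerE; move: ((cheb R k.+1)^`().[x]) (((cheb R k.+1)^`())^`().[x]) (((cheb R k)^`())^`().[x]) => a b c /=; ring.
Qed.

Lemma T0 (x : R) : T 0 x = 1. Proof. by rewrite /T /= hornerE. Qed.
Lemma T1 (x : R) : T 1 x = x. Proof. by rewrite /T /= hornerE. Qed.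
Lemma T'0 (x : R) : T' 0 x = 0. Proof. by rewrite /T' /= derivC hornerE. Qed.
Lemma T'1 (x : R) : T' 1 x = 1. Proof. by rewrite /T' /= derivX hornerE. Qed.
Lemma T''0 (x : R) : T'' 0 x = 0. Proof. by rewrite /T'' /derivn /= derivC deriv0 hornerE. Qed.
Lemma T''1 (x : R) : T'' 1 x = 0. Proof. by rewrite /T'' /derivn /= derivX derivC hornerE. Qed.

Lemma cheb_mono (x : R) : 1 <= x -> forall k,
  [/\ 1 <= T k x <= T k.+1 x, 0 <= T' k x <= T' k.+1 x &
      0 <= T'' k x <= T'' k.+1 x].
Proof.
move=> x1; elim=> [|k [/andP[a1 a2] /andP[b1 b2] /andP[c1 c2]]].
  by rewrite T0 T1 T'0 T'1 T''0 T''1; split; apply/andP; split; lra.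
split; apply/andP; split; try lra.
- rewrite TSS; nra.
- rewrite T'SS; nra.
- rewrite T''SS; nra.
Qed.

Lemma T_ge1 (x : R) k : 1 <= x -> 1 <= T k x.
Proof. by move=> x1; have [/andP[]] := cheb_mono x1 k. Qed.

Lemma T'_gt0 (x : R) k : 1 <= x -> 0 < T' k.+1 x.
Proof.
move=> x1; case: k => [|k]; first by rewrite T'1.
have [/andP[a1 a2] /andP[b1 b2] _] := cheb_mono x1 k.
have [/andP[a1' a2'] /andP[b1' b2'] _] := cheb_mono x1 k.+1.
rewrite T'SS; nra.
Qed.

Lemma T''_gt0 (x : R) k : 1 <= x -> 0 < T'' k.+2 x.
Proof.
move=> x1.
have [_ /andP[b1 b2] /andP[c1 c2]] := cheb_mono x1 k.
have := T'_gt0 k x1.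
rewrite T''SS; nra.
Qed.
End Cheb.

Section Coef.
Variables (R : realType) (p s : nat) (eps : R).
Hypothesis eps0 : 0 <= eps.

Lemma w0_ge1 : 1 <= w0 s eps.
Proof.
rewrite /w0 lerDl; apply: divr_ge0 => //; exact: exprn_ge0.
Qed.

Lemma bcoef_neq0 j : bcoef p s eps j != 0.
Proof.
have x1 := w0_ge1.
rewrite /bcoef; case: ifP => _.
  rewrite div1r invr_eq0; have := T_ge1 j x1; move=> h; apply: lt0r_neq0; lra.
have : (2 <= maxn j 2)%N by rewrite leq_maxr.
case: (maxn j 2) => [|[|k]] // _.
have h1 := T''_gt0 k x1; have h2 := T'_gt0 k.+1 x1.
apply: lt0r_neq0; apply: divr_gt0 => //; exact: exprn_gt0.
Qed.

Definition cc j := bcoef p s eps j * T' j (w0 s eps) * w1 p s eps.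
Definition ee j := bcoef p s eps j * w1 p s eps ^+ 2 * T'' j (w0 s eps) / 2.

Lemma cc_rec j : cc j.+2 = nu p s eps j.+2 * cc j.+1 + kappa p s eps j.+2 * cc j
  + mu p s eps j.+2 + gamma p s eps j.+2.
Proof.
rewrite /cc /gamma /nu /kappa /mu /acoef /= T'SS.
have h1 := bcoef_neq0 j.+1; have h0 := bcoef_neq0 j.
by field; rewrite h0 h1.
Qed.

Lemma ee_rec j : ee j.+2 = nu p s eps j.+2 * ee j.+1 + kappa p s eps j.+2 * ee j
  + mu p s eps j.+2 * cc j.+1.
Proof.
rewrite /cc /ee /gamma /nu /kappa /mu /acoef /= T''SS.
have h1 := bcoef_neq0 j.+1; have h0 := bcoef_neq0 j.
by field; rewrite h0 h1.
Qed.

Lemma cc0 : cc 0 = 0. Proof. by rewrite /cc T'0 mulr0 mul0r. Qed.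
Lemma cc1 : cc 1 = mu1 p s eps. Proof. by rewrite /cc T'1 mulr1. Qed.
Lemma ee0 : ee 0 = 0. Proof. by rewrite /ee T''0 mulr0 mul0r. Qed.
Lemma ee1 : ee 1 = 0. Proof. by rewrite /ee T''1 mulr0 mul0r. Qed.

Lemma cc_s : (1 <= s)%N -> (p = 1%N \/ (p = 2%N /\ (2 <= s)%N)) -> cc s = 1.
Proof.
have x1 := w0_ge1.
rewrite /cc /bcoef /w1 => s1 [->|[-> s2]] /=.
  case: s s1 x1 => // k _ x1.
  have h1 := T_ge1 k.+1 x1; have h2 := T'_gt0 k x1.
  field; apply/andP; split; apply: lt0r_neq0; lra.
case: s s2 x1 => [|[|k]] // _ x1.
have h1 := T''_gt0 k x1; have h2 := T'_gt0 k.+1 x1.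
rewrite (maxn_idPl _) //.
field; apply/andP; split; apply: lt0r_neq0; lra.
Qed.

Lemma ee_s : (2 <= s)%N -> p = 2%N -> ee s = 2^-1.
Proof.
have x1 := w0_ge1.
rewrite /ee /bcoef /w1 => s2 -> /=.
case: s s2 x1 => [|[|k]] // _ x1.
have h1 := T''_gt0 k x1; have h2 := T'_gt0 k.+1 x1.
rewrite (maxn_idPl _) //.
field; apply/andP; split; apply: lt0r_neq0; lra.
Qed.
End Coef.

Section Ob.
Context {R : realType}.

Definition Ob {V : normedModType R} (k : nat) (u : R -> V) :=
  exists C : R, \forall t \near at_right (0:R), `|u t| <= C * t ^+ k.

Lemma near_pos : \forall t \near at_right (0:R), 0 < t.
Proof. exact: nbhs_right_gt. Qed.
Lemma near_lt1 : \forall t \near at_right (0:R), 0 < t < 1.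
Proof.
apply: filterS2 (nbhs_right_gt 0) (nbhs_right_lt (@ltr01 R)) => t a b.
by rewrite a b.
Qed.

Lemma Ob_abs {V : normedModType R} k (u : R -> V) : Ob k u -> exists2 C : R, 0 <= C & \forall t \near at_right (0:R), `|u t| <= C * t ^+ k.
Proof.
move=> [C HC]; exists `|C|; first exact: normr_ge0.
apply: filterS2 HC near_pos => t Ht t0; apply: le_trans Ht _; apply: ler_wpM2r.
  by apply: exprn_ge0; apply: ltW.
exact: ler_norm.
Qed.

Context {V : normedModType R}.
Implicit Types u v : R -> V.

Lemma Ob_add k u v : Ob k u -> Ob k v -> Ob k (fun t => u t + v t).
Proof.
move=> [C1 H1] [C2 H2]; exists (C1 + C2).
apply: filterS2 H1 H2 => t h1 h2.
apply: (le_trans (ler_normD _ _)); rewrite mulrDl; exact: lerD.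
Qed.

Lemma Ob_scale k (c : R) u : Ob k u -> Ob k (fun t => c *: u t).
Proof.
move=> /Ob_abs [C C0 H]; exists (`|c| * C); apply: filterS H => t h.
rewrite normrZ -mulrA; exact: ler_wpM2l.
Qed.

Lemma Ob_ext k u v : (forall t, 0 < t -> u t = v t) -> Ob k u -> Ob k v.
Proof.
move=> E [C H]; exists C; apply: filterS2 H near_pos => t h t0.
by rewrite -E.
Qed.

Lemma Ob_opp k u : Ob k u -> Ob k (fun t => - u t).
Proof.
move=> H; apply: Ob_ext (Ob_scale (-1) H) => t _.
by rewrite scaleN1r.
Qed.

Lemma Ob_sub k u v : Ob k u -> Ob k v -> Ob k (fun t => u t - v t).
Proof. by move=> H1 H2; apply: Ob_add H1 (Ob_opp H2). Qed.

Lemma Ob0 k : Ob k (fun _ => (0 : V)).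
Proof. by exists 0; apply: nearW => t; rewrite normr0 mul0r. Qed.

Lemma Ob_weak k m u : (k <= m)%N -> Ob m u -> Ob k u.
Proof.
move=> km /Ob_abs [C C0 H]; exists C.
apply: filterS2 H near_lt1 => t h /andP[t0 t1].
apply: le_trans h _; apply: ler_wpM2l => //.
apply: ler_wiXn2l; [exact: ltW | exact: ltW | exact: km].
Qed.

Lemma Ob_mul k1 k2 (a : R -> R) u : Ob k1 a -> Ob k2 u ->
  Ob (k1 + k2) (fun t => a t *: u t).
Proof.
move=> /Ob_abs [C1 C10 H1] /Ob_abs [C2 C20 H2]; exists (C1 * C2).
apply: filterS2 H1 H2 => t h1 h2.
rewrite normrZ exprD mulrACA; apply: ler_pM => //.
Qed.

Lemma Ob_pow k (v : V) : Ob k (fun t : R => t ^+ k *: v).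
Proof.
exists `|v|; apply: filterS near_pos => t t0.
rewrite normrZ ger0_norm 1?mulrC //; exact/exprn_ge0/ltW.
Qed.

Lemma Ob_id : Ob 1 (fun t : R => t).
Proof.
exists 1; apply: filterS near_pos => t t0.
by rewrite expr1 mul1r ger0_norm // ltW.
Qed.

Lemma Ob_comp {W : normedModType R} m (g : V -> W) (d : R -> V) :
  (exists2 del : R, 0 < del & exists K : R,
     forall h, `|h| < del -> `|g h| <= K * `|h| ^+ m) ->
  Ob 1 d -> Ob m (fun t => g (d t)).
Proof.
move=> [del del0 [K HK]] /Ob_abs [C C0 H].
exists (`|K| * C ^+ m).
have hC : 0 < del / (C + 1) by apply: divr_gt0 => //; lra.
apply: filterS3 H near_pos (nbhs_right_lt hC) => t h t0 tl.
rewrite expr1 in h.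
have tC : C * t < del.
  rewrite ltr_pdivlMr in tl; last lra.
  nra.
apply: le_trans (HK _ (le_lt_trans h tC)) _.
apply: le_trans (_ : `|K| * `|d t| ^+ m <= _).
  apply: ler_wpM2r; [exact: exprn_ge0 | exact: ler_norm].
rewrite -mulrA -exprMn; apply: ler_wpM2l => //; apply: lerXn2r => //.
- by rewrite nnegrE.
- by rewrite nnegrE; apply: mulr_ge0 => //; apply: ltW.
Qed.

End Ob.

Unset Implicit Arguments. Set Strict Implicit.
Section S.
Context {R : realType}.

Lemma mx_entry_le m n (M : 'M[R]_(m, n)) i j : `|M i j| <= `|M|.
Proof.
rewrite [leRHS]/Num.Def.normr /= mx_normrE.
by apply: le_trans; last exact: (le_bigmax _ _ (i, j)).
Qed.

Lemma mx_norm_le m n (M : 'M[R]_(m, n)) (r : R) :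
  0 <= r -> (forall i j, `|M i j| <= r) -> `|M| <= r.
Proof.
move=> r0 H; rewrite [leLHS]/Num.Def.normr /= mx_normrE.
by apply: bigmax_le => // -[i j] _; exact: H.
Qed.

Lemma mulmx_entry_le n m (h : 'rV[R]_n) (M : 'M[R]_(n, m)) i :
  `|(h *m M) 0 i| <= n%:R * `|h| * `|M|.
Proof.
rewrite mxE; apply: (le_trans (ler_norm_sum _ _ _)).
apply: le_trans (_ : \sum_(k < n) `|h| * `|M| <= _).
  apply: ler_sum => k _; rewrite normrM; apply: ler_pM => //.
    exact: mx_entry_le.
  exact: mx_entry_le.
by rewrite sumr_const card_ord -mulrA mulr_natl.
Qed.

Lemma mxB_entry m n (A B : 'M[R]_(m, n)) i j : (A - B) i j = A i j - B i j.
Proof. by rewrite !mxE. Qed.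

Context {V W : normedModType R}.
Lemma line_derivable (f : V -> W) y h (t : R) :
  derivable f (y + t *: h) h ->
  derivable (fun s : R => f (y + s *: h)) t 1 /\
  'D_1 (fun s : R => f (y + s *: h)) t = 'D_h f (y + t *: h).
Proof.
have E : (fun s : R => s^-1 *: ((fun s : R => f (y + s *: h)) (s *: 1 + t) - f (y + t *: h)))
   = (fun s => s^-1 *: (f (s *: h + (y + t *: h)) - f (y + t *: h))).
  apply: funext => s /=; congr (_ *: (f _ - _)).
  by rewrite [_%:A]mulr1 scalerDl addrCA addrA.
by rewrite /derivable /derive /= E.
Qed.
Lemma near0_ball (P : V -> Prop) : (\forall h \near (0:V), P h) ->
  exists2 del : R, 0 < del & forall h, `|h| < del -> P h.
Proof.
move=> /nbhs_ballP [e e0 He]; exists e => // h hh; apply: He.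
by rewrite -ball_normE /= sub0r normrN.
Qed.

Lemma diff_lip (g : V -> W) y : differentiable g y ->
  exists2 del : R, 0 < del & exists K : R,
     forall h, `|h| < del -> `|g (y + h) - g y| <= K * `|h| ^+ 1.
Proof.
move=> dg; have /eqaddoP L := diff_locally dg.
have [del del0 Hd] := near0_ball _ (L _ ltr01).
have [k k0 Hk] := linear_lipschitz (diff_continuous dg).
exists del => //; exists (k + 1) => h /Hd /=.
move=> hb0.
have hb : `|g (h + y) - (g y + 'd g y h)| <= 1 * `|h| := hb0.
rewrite [h + y]addrC mul1r in hb; rewrite expr1.
have -> : g (y + h) - g y = (g (y + h) - (g y + 'd g y h)) + 'd g y h.
  by rewrite opprD addrA subrK.
apply: (le_trans (ler_normD _ _)); rewrite mulrDl mul1r addrC.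
apply: lerD => //.
Qed.
End S.

Section Taylor.
Context {R : realType} (n : nat) (f : 'rV[R]_n -> 'rV[R]_n).
Hypothesis df : forall x, differentiable f x.

Lemma d_jac x h : 'd f x h = h *m jacobian f x.
Proof. by rewrite -deriveE // deriveEjacobian. Qed.

Lemma taylor2 y : differentiable (jacobian f) y ->
  exists2 del : R, 0 < del & exists K : R,
     forall h, `|h| < del -> `|f (y + h) - f y - 'd f y h| <= K * `|h| ^+ 2.
Proof.
move=> dJ; have [del del0 [L HL]] := diff_lip _ _ dJ.
exists del => //; exists (n%:R * `|L|) => h hd.
apply: mx_norm_le => [|i0 i].
  by apply: mulr_ge0; [apply: mulr_ge0 => //; exact: ler0n | exact: exprn_ge0].
set G := fun s : R => f (y + s *: h) i0 i.
have dG : forall t, derivable G t 1 /\ 'D_1 G t = (h *m jacobian f (y + t *: h)) i0 i.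
  move=> t; have [D1 D2] := line_derivable _ _ _ _ (@diff_derivable _ _ _ f (y + t *: h) h (df _)).
  have := (derivable_mxP _ _ _).1 D1 i0 i => DG; split => //.
  rewrite -deriveEjacobian // -D2 derive_mx // mxE //.
have [c cI Hc] : exists2 c, c \in `[0, 1] & G 1 - G 0 = 'D_1 G c * (1 - 0).
  apply: MVT_segment => //.
  - by move=> x _; apply: derivableP; exact: (dG x).1.
  - by apply: derivable_within_continuous => x _; exact: (dG x).1.
move: Hc; rewrite /G scale1r scale0r addr0 subr0 mulr1 (dG c).2 => Hc.
have -> : (f (y + h) - f y - 'd f y h) i0 i = (h *m (jacobian f (y + c *: h) - jacobian f y)) i0 i.
  rewrite d_jac mulmxBr; rewrite [LHS]mxB_entry [RHS]mxB_entry; congr (_ - _); rewrite -Hc; apply: mxB_entry.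
have /andP[c0 c1] : 0 <= c <= 1 by rewrite in_itv /= in cI.
have -> : i0 = 0 by apply: ord1.
have B := mulmx_entry_le _ _ h (jacobian f (y + c *: h) - jacobian f y) i.
apply: le_trans B _.
have hc : `|c *: h| <= `|h|.
  rewrite normrZ ger0_norm //; apply: ler_piMl => //.
have := HL _ (le_lt_trans hc hd); rewrite expr1 => HM.
have HM' : `|jacobian f (y + c *: h) - jacobian f y| <= `|L| * `|h|.
  apply: le_trans HM _; apply: le_trans (_ : `|L| * `|c *: h| <= _).
    by apply: ler_wpM2r => //; exact: ler_norm.
  by apply: ler_wpM2l.
move: (ler0n R n) (normr_ge0 h) HM'.
move: (n%:R : R) (`|h|) (`|L|) (`|'J f (y + c *: h) - 'J f y|) => a b l m a0 b0 H.
rewrite expr2; have : 0 <= a * b by apply: mulr_ge0.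
nra.
Qed.
End Taylor.

Lemma Ob_lin {R : realType} {V W : normedModType R} (g : V -> W) (K : R) k (u : R -> V) :
  0 <= K -> (forall x, `|g x| <= K * `|x|) -> Ob k u -> Ob k (fun t => g (u t)).
Proof.
move=> K0 HK /Ob_abs [C C0 H]; exists (K * C).
apply: filterS H => t h; apply: le_trans (HK _) _.
rewrite -mulrA; exact: ler_wpM2l.
Qed.

Section Main.
Context {R : realType} (n : nat) (f : 'rV[R]_n -> 'rV[R]_n) (y : 'rV[R]_n) (s : nat) (eps : R).
Hypothesis df : forall x, differentiable f x.
Hypothesis eps0 : 0 <= eps.

Lemma idA (a b m g c0 c1 t : R) (d0 d1 F D : 'rV[R]_n) :
  a *: d1 + b *: d0 + (m * t) *: (F + D) + (g * t) *: F
  - (t * (a * c1 + b * c0 + m + g)) *: F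
  = a *: (d1 - (t * c1) *: F) + b *: (d0 - (t * c0) *: F) + (m * t) *: D.
Proof. apply/rowP => i; rewrite !mxE; ring. Qed.

Lemma idB (a b m g c0 c1 e0 e1 t : R) (d0 d1 F Df Dh Df1 L1 : 'rV[R]_n) :
  a *: d1 + b *: d0 + (m * t) *: (F + Dh) + (g * t) *: F
  - (t * (a * c1 + b * c0 + m + g)) *: F
  - (t ^+ 2 * (a * e1 + b * e0 + m * c1)) *: Df
  = a *: (d1 - (t * c1) *: F - (t ^+ 2 * e1) *: Df)
  + b *: (d0 - (t * c0) *: F - (t ^+ 2 * e0) *: Df)
  + (m * t) *: (Dh - Df1) + (m * t) *: (Df1 - L1) + (m * t) *: (L1 - (t * c1) *: Df).
Proof. apply/rowP => i; rewrite !mxE; ring. Qed.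

Section Rec.
Variables (p : nat) (dfhat : nat -> R -> 'rV[R]_n).
Local Notation d t j := (rkc_d p s eps f y dfhat t j).

Lemma rkc_dS t j : d t j.+1 = (rkc_pair p s eps f y dfhat t j).2.
Proof. by rewrite /rkc_d /=; case: rkc_pair. Qed.

Lemma rkc_dSS t j : d t j.+2 = rkc_stage p s eps f y dfhat t j.+2 (d t j) (d t j.+1).
Proof.
rewrite rkc_dS (rkc_dS t j) /rkc_d /=.
by case: (rkc_pair p s eps f y dfhat t j).
Qed.

Lemma Ob_mut (c : R) : Ob 1 (fun t : R => c * t).
Proof. by apply: Ob_ext (Ob_scale c Ob_id) => t _. Qed.

Lemma Ob_tv (c : R) (v : 'rV[R]_n) : Ob 1 (fun t : R => (t * c) *: v).
Proof. by apply: Ob_ext (Ob_pow 1 (c *: v)) => t _; rewrite expr1 scalerA. Qed.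

Lemma ind_a :
  (forall j, (1 <= j <= s.-1)%N ->
     Ob 1 (fun t => dfhat j t - Delta_f p s eps f y dfhat t j)) ->
  forall j, (j <= s)%N -> Ob 2 (fun t => d t j - (t * cc p s eps j) *: f y).
Proof.
move=> H.
have Lip := diff_lip _ _ (df y).
suff Sf : forall m j, (j <= m)%N -> (j <= s)%N ->
    Ob 2 (fun t => d t j - (t * cc p s eps j) *: f y)
  by move=> jj jjs; apply: (Sf jj); [exact: leqnn | exact: jjs].
have Z : Ob 2 (fun t => d t 0 - (t * cc p s eps 0) *: f y).
  by apply: Ob_ext (Ob0 2) => t _; rewrite cc0 mulr0 scale0r subr0.
elim=> [|m IH] j jm js.
  by move: jm; rewrite leqn0 => /eqP ->.
case: j jm js => [|[|k]] jm js //.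
  apply: Ob_ext (Ob0 2) => t _.
  by rewrite cc1 /rkc_d /= mulrC subrr.
have I0 := IH k (ltac:(lia)) (ltac:(lia)).
have I1 := IH k.+1 (ltac:(lia)) (ltac:(lia)).
have D1 : Ob 1 (fun t => d t k.+1).
  apply: Ob_ext (Ob_add (Ob_weak (isT : (1 <= 2)%N) I1) (Ob_tv (cc p s eps k.+1) (f y))).
  by move=> t _; rewrite subrK.
have DF : Ob 1 (fun t => Delta_f p s eps f y dfhat t k.+1).
  exact: (Ob_comp (g := fun h => f (y + h) - f y)) Lip D1.
have DH : Ob 1 (fun t => dfhat k.+1 t).
  apply: Ob_ext (Ob_add (H k.+1 _) DF) => [t _|]; first by rewrite subrK.
  lia.
have M := Ob_mul (Ob_mut (mu p s eps k.+2)) DH.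
apply: Ob_ext (Ob_add (Ob_add (Ob_scale (nu p s eps k.+2) I1)
   (Ob_scale (kappa p s eps k.+2) I0)) M) => t _.
by rewrite rkc_dSS /rkc_stage cc_rec //= idA.
Qed.

Hypothesis dJ : differentiable (jacobian f) y.

Lemma ind_b :
  (forall j, (1 <= j <= s.-1)%N ->
     Ob 2 (fun t => dfhat j t - Delta_f p s eps f y dfhat t j)) ->
  forall j, (j <= s)%N -> Ob 3 (fun t => d t j - (t * cc p s eps j) *: f y
                                 - (t ^+ 2 * ee p s eps j) *: 'd f y (f y)).
Proof.
move=> H.
have Tay := @taylor2 R n f df y dJ.
have [K K0 HK] := linear_lipschitz (diff_continuous (df y)).
suff Sf : forall m j, (j <= m)%N -> (j <= s)%N ->
    Ob 3 (fun t => d t j - (t * cc p s eps j) *: f y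
                                 - (t ^+ 2 * ee p s eps j) *: 'd f y (f y))
  by move=> jj jjs; apply: (Sf jj); [exact: leqnn | exact: jjs].
have Z : Ob 3 (fun t => d t 0 - (t * cc p s eps 0) *: f y
                                 - (t ^+ 2 * ee p s eps 0) *: 'd f y (f y)).
  by apply: Ob_ext (Ob0 3) => t _; rewrite cc0 ee0 !mulr0 !scale0r !subr0.
elim=> [|m IH] j jm js.
  by move: jm; rewrite leqn0 => /eqP ->.
case: j jm js => [|[|k]] jm js //.
  apply: Ob_ext (Ob0 3) => t _.
  by rewrite cc1 ee1 mulr0 scale0r subr0 /rkc_d /= mulrC subrr.
have I0 := IH k (ltac:(lia)) (ltac:(lia)).
have I1 := IH k.+1 (ltac:(lia)) (ltac:(lia)).
have X1 : Ob 2 (fun t => d t k.+1 - (t * cc p s eps k.+1) *: f y).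
  apply: Ob_ext (Ob_add (Ob_weak (isT : (2 <= 3)%N) I1)
                        (Ob_pow 2 (ee p s eps k.+1 *: 'd f y (f y)))).
  by move=> t _; rewrite scalerA subrK.
have D1 : Ob 1 (fun t => d t k.+1).
  apply: Ob_ext (Ob_add (Ob_weak (isT : (1 <= 2)%N) X1) (Ob_tv (cc p s eps k.+1) (f y))).
  by move=> t _; rewrite subrK.
have T1 : Ob 2 (fun t => Delta_f p s eps f y dfhat t k.+1 - 'd f y (d t k.+1)).
  exact: (Ob_comp (g := fun h => f (y + h) - f y - 'd f y h)) Tay D1.
have L1 : Ob 2 (fun t => 'd f y (d t k.+1 - (t * cc p s eps k.+1) *: f y)).
  exact: (@Ob_lin _ _ _ ('d f y) K _ _ (ltW K0) HK X1).
have H2 : Ob 2 (fun t => dfhat k.+1 t - Delta_f p s eps f y dfhat t k.+1).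
  apply: H; lia.
have Mu := Ob_mut (mu p s eps k.+2).
apply: Ob_ext (Ob_add (Ob_add (Ob_add (Ob_add (Ob_scale (nu p s eps k.+2) I1)
   (Ob_scale (kappa p s eps k.+2) I0)) (Ob_mul Mu H2)) (Ob_mul Mu T1)) (Ob_mul Mu L1)).
move=> t _.
have E : 'd f y (d t k.+1 - (t * cc p s eps k.+1) *: f y)
   = 'd f y (d t k.+1) - (t * cc p s eps k.+1) *: 'd f y (f y).
  by rewrite linearB linearZ.
rewrite E rkc_dSS /rkc_stage cc_rec // ee_rec //=.
exact: (esym (idB _ _ _ _ _ _ _ _ _ _ _ _ _ _ _ _)).
Qed.

End Rec.

Lemma Ob_eqO_a k (u : R -> 'rV[R]_n) (c : R) : 0 <= c -> Ob k u ->
  u =O_ (at_right (0:R)) (fun t => c * t ^+ k + t ^+ k).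
Proof.
move=> c0 /Ob_abs [C C0 HC]; apply/eqO_exP; exists ((C + 1) / (c + 1)).
  by apply: divr_gt0; lra.
apply: filterS2 HC near_pos => t h t0.
apply: le_trans h _.
have tk : 0 < t ^+ k by exact: exprn_gt0.
rewrite ger0_norm; last by apply: addr_ge0; [apply: mulr_ge0 => //|]; apply: ltW.
have -> : c * t ^+ k + t ^+ k = (c + 1) * t ^+ k by ring.
rewrite mulrA divfK; last by apply: lt0r_neq0; lra.
apply: ler_wpM2r; [exact: ltW | lra].
Qed.

Lemma Ob_eqO k (u : R -> 'rV[R]_n) : Ob k u ->
  u =O_ (at_right (0:R)) (fun t => t ^+ k).
Proof.
move=> /Ob_abs [C C0 HC]; apply/eqO_exP; exists (C + 1); first lra.
apply: filterS2 HC near_pos => t h t0.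
apply: le_trans h _.
have tk : 0 < t ^+ k by exact: exprn_gt0.
rewrite ger0_norm; last exact: ltW.
apply: ler_wpM2r; [exact: ltW | lra].
Qed.

Lemma eqO_Ob1 (u : R -> 'rV[R]_n) (c : R) :
  u =O_ (at_right (0:R)) (fun t => c * t) -> Ob 1 u.
Proof.
move=> /eqO_exP [K K0 HK]; exists (K * `|c|).
apply: filterS2 HK near_pos => t h t0.
apply: le_trans h _; rewrite normrM (ger0_norm (ltW t0)) expr1 mulrA //.
Qed.

Lemma eqO_Ob2 (u : R -> 'rV[R]_n) :
  u =O_ (at_right (0:R)) (fun t => t ^+ 2) -> Ob 2 u.
Proof.
move=> /eqO_exP [K K0 HK]; exists K.
apply: filterS2 HK near_pos => t h t0.
apply: le_trans h _; rewrite ger0_norm //; exact/exprn_ge0/ltW.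
Qed.

End Main.

Theorem theorem3p1 (R : realType) (n : nat) (f : 'rV[R]_n -> 'rV[R]_n)
  (y : 'rV[R]_n) (s : nat) (eps epsc : R) :
  (forall x, differentiable f x) ->
  (forall x, differentiable (jacobian f) x) ->
  (1 <= s)%N -> 0 <= eps -> 0 < epsc ->
  (* (a) *)
  (forall (p : nat), (p = 1%N \/ (p = 2%N /\ (2 <= s)%N)) ->
   forall dfhat : nat -> R -> 'rV[R]_n,
   (forall j : nat, (1 <= j <= s.-1)%N ->
      (fun dt => dfhat j dt - Delta_f p s eps f y dfhat dt j)
        =O_ (at_right (0:R)) (fun dt => epsc * dt)) ->
   (fun dt => rkc_step p s eps f y dfhat dt - y - dt *: f y)
     =O_ (at_right (0:R)) (fun dt => epsc * dt ^+ 2 + dt ^+ 2))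
  /\
  (* (b) *)
  ((2 <= s)%N ->
   forall dfhat : nat -> R -> 'rV[R]_n,
   (forall j : nat, (1 <= j <= s.-1)%N ->
      (fun dt => dfhat j dt - Delta_f 2 s eps f y dfhat dt j)
        =O_ (at_right (0:R)) (fun dt => dt ^+ 2)) ->
   (fun dt => rkc_step 2 s eps f y dfhat dt - y - dt *: f y
                - (2^-1 * dt ^+ 2) *: 'd f y (f y))
     =O_ (at_right (0:R)) (fun dt => dt ^+ 3)).
Proof.
move=> df dJ s1 eps0 epsc0; split.
  move=> p hp dfhat H.
  have := @ind_a R n f y s eps df eps0 p dfhat (fun j hj => @eqO_Ob1 R n _ _ (H j hj)) s (leqnn s).
  rewrite (cc_s eps0 s1 hp) => Hs.
  apply: (@Ob_eqO_a R n 2 _ epsc (ltW epsc0)).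
  by apply: Ob_ext Hs => t _; rewrite /rkc_step mulr1 (addrC y) addrK.
move=> s2 dfhat H.
have := @ind_b R n f y s eps df eps0 2 dfhat (dJ y) (fun j hj => @eqO_Ob2 R n _ (H j hj)) s (leqnn s).
rewrite (cc_s eps0 s1 (or_intror (conj erefl s2))) (ee_s eps0 s2 erefl) => Hs.
apply: (@Ob_eqO R n 3).
by apply: Ob_ext Hs => t _; rewrite /rkc_step mulr1 (addrC y) addrK mulrC.
Qed.
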